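(* In any finite ELP, for any policy $\pi$, $Q^*$ is an optimal solution of the problem: maximize $\mathbb E_\pi[Q(S_T,A_T)]$ over $Q\in\mathcal Q$ subject to $Q(s,a)\le\mathcal BQ(s,a)$ for all $(s,a)$. Equivalently, $Q^*\in\arg\max_{Q\in\mathcal Q}\min_{\lambda\ge0}\mathcal L_\pi(Q,\lambda)$.
   Context: A finite ELP is $(\mathcal S,\mathcal A,P,R,\rho)$ with finite $\mathcal S,\mathcal A$, reward $R:\mathcal S\to\mathbb R$, transitions $P(s'|s,a)$, distribution $\rho$, and nonempty terminal set $\mathcal S_\bot$. Under a policy $\pi$, $S_0$ is a fixed terminal state, $A_t\sim\pi(\cdot|S_t)$, $S_{t+1}\sim P(\cdot|S_t,A_t)$, and $T=\inf\{t\ge1:S_t\in\mathcal S_\bot\}$. ELP conditions: $\mathbb E_\pi[T]<\infty$ for every $\pi$; $P(s'|s,a)=\rho(s')$ for all $s\in\mathcal S_\bot$, all $a,s'$; every state is reachable under some policy. $\mathcal Q$ = all functions $\mathcal S\times\mathcal A\to\mathbb R$; $\lambda\ge0$ ranges over functions $\mathcal S\times\mathcal A\to[0,\infty)$. $\mathcal BQ(s,a)=\sum_{s'}P(s'|s,a)\big(R(s')+\mathbf 1[s'\notin\mathcal S_\bot]\max_{a'}Q(s',a')\big)$, with unique fixed point $Q^*$. $\mathcal L_\pi(Q,\lambda)=\mathbb E_\pi[Q(S_T,A_T)]+\sum_{s,a}\lambda(s,a)(\mathcal BQ(s,a)-Q(s,a))$ with $A_T\sim\pi(\cdot|S_T)$.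 *)

(* Defs.v *)
From HB Require Import structures.
From mathcomp Require Import all_boot all_order all_algebra.
From mathcomp Require Import all_classical all_reals all_analysis.
Set Implicit Arguments. Unset Strict Implicit. Unset Printing Implicit Defensive.
Import Order.TTheory GRing.Theory Num.Theory.
Import numFieldNormedType.Exports.
Local Open Scope ring_scope.
Local Open Scope classical_set_scope.

Section ELP.
Variables (R : realType) (S A : finType).

(* P s a s' = P(s' | s, a);  rho s' ;  Rw : S -> R the reward;
   Sbot the terminal set; s0 the fixed terminal initial state S_0. *)

Definition is_distr (T : finType) (d : T -> R) :=
  (forall x, 0 <= d x) /\ \sum_(x : T) d x = 1.

Definition is_kernel (P : S -> A -> S -> R) :=
  forall s a, is_distr (P s a).

Definition is_policy (pi : S -> A -> R) := forall s, is_distr (pi s).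

Definition stepK (P : S -> A -> S -> R) (pi : S -> A -> R) (s s' : S) : R :=
  \sum_(a : A) pi s a * P s a s'.

(* state distribution of the (never stopped) process: dist t s = P_pi(S_t = s) *)
Fixpoint dist (P : S -> A -> S -> R) (pi : S -> A -> R) (s0 : S) (t : nat) (s' : S)
  : R :=
  match t with
  | 0 => if s' == s0 then 1 else 0
  | t.+1 => \sum_(s : S) dist P pi s0 t s * stepK P pi s s'
  end.

(* alive t s = P_pi(S_{t+1} = s, T >= t+1), where T = inf{t >= 1 : S_t in Sbot} *)
Fixpoint alive (Sbot : {set S}) (P : S -> A -> S -> R) (pi : S -> A -> R) (s0 : S)
  (t : nat) (s' : S) : R :=
  match t with
  | 0 => stepK P pi s0 s'
  | t.+1 => \sum_(s : S | s \notin Sbot) alive Sbot P pi s0 t s * stepK P pi s s'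
  end.

(* E_pi[T] = sum_{t >= 1} P(T >= t), as an extended real *)
Definition expected_T (Sbot : {set S}) P pi s0 : \bar R :=
  (\sum_(t <oo) (\sum_(s : S) alive Sbot P pi s0 t s)%:E)%E.

Definition reachable P pi s0 (s : S) := exists t, 0 < dist P pi s0 t s.

Definition is_ELP (Sbot : {set S}) (P : S -> A -> S -> R) (rho : S -> R) (s0 : S) :=
  is_kernel P /\ is_distr rho /\ Sbot != finset.set0 /\ s0 \in Sbot /\
  (forall pi, is_policy pi -> (expected_T Sbot P pi s0 < +oo)%E) /\
  (forall s a s', s \in Sbot -> P s a s' = rho s') /\
  (forall s, exists pi, is_policy pi /\ reachable P pi s0 s).

Definition maxQ (Q : S -> A -> R) (s : S) : R :=
  fine (\big[Order.max/-oo%E]_(a : A) (Q s a)%:E).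

Definition bellman (Sbot : {set S}) (P : S -> A -> S -> R) (Rw : S -> R) (Q : S -> A -> R)
  (s : S) (a : A) : R :=
  \sum_(s' : S) P s a s' * (Rw s' + (if s' \notin Sbot then maxQ Q s' else 0)).

(* E_pi[Q(S_T, A_T)], A_T ~ pi(.|S_T) *)
Definition expected_QT (Sbot : {set S}) P pi s0 (Q : S -> A -> R) : R :=
  let u : R^nat := fun t : nat =>
    \sum_(s : S | s \in Sbot) alive Sbot P pi s0 t s * \sum_(a : A) pi s a * Q s a in
  limn (series u).

Definition lagrangian Sbot P Rw pi s0 (Q lam : S -> A -> R) : R :=
  expected_QT Sbot P pi s0 Q +
  \sum_(s : S) \sum_(a : A) lam s a * (bellman Sbot P Rw Q s a - Q s a).

Definition dual_fun Sbot P Rw pi s0 (Q : S -> A -> R) : \bar R :=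
  ereal_inf [set (lagrangian Sbot P Rw pi s0 Q lam)%:E |
              lam in [set lam : S -> A -> R | forall s a, 0 <= lam s a]].

End ELP.

(* Main.v *)
Require Import Defs.
From HB Require Import structures.
From mathcomp Require Import all_boot all_order all_algebra.
From mathcomp Require Import all_classical all_reals all_analysis.
From mathcomp Require Import lra.
Import Order.TTheory GRing.Theory Num.Theory.
Import numFieldNormedType.Exports.
Local Open Scope ring_scope.

Lemma bound_fin (R : realType) (S : finType) (g : S -> R) :
  exists K, 0 <= K /\ forall s, `|g s| <= K.
Proof.
exists (\sum_s `|g s|); split; first exact: sumr_ge0.
move=> s; rewrite (bigD1 s) //= lerDl; exact: sumr_ge0.
Qed.

Lemma dom_cvg (R : realType) (u w : nat -> R) (K : R) :
  0 <= K -> (forall n, 0 <= w n) -> cvgn (series w) ->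
  (forall n, `|u n| <= K * w n) -> cvgn (series u).
Proof.
move=> K0 w0 cw hu; apply: normed_cvg.
apply: (@series_le_cvg _ _ (K *: w)) => //.
- move=> n /=; exact: normr_ge0.
- move=> n /=; rewrite /GRing.scale /=; exact: mulr_ge0.
- exact: is_cvg_seriesZ.
Qed.

Lemma alive_ge0 (R : realType) (S A : finType) Sbot (P : S -> A -> S -> R) pi s0 t s :
  (forall s a s', 0 <= P s a s') -> (forall s a, 0 <= pi s a) ->
  0 <= alive Sbot P pi s0 t s.
Proof.
move=> P0 pi0.
have hK : forall s s', 0 <= stepK P pi s s'.
  by move=> x y; apply: sumr_ge0 => a _; apply: mulr_ge0.
elim: t s => [|t IH] s /=; first exact: hK.
by apply: sumr_ge0 => x _; apply: mulr_ge0.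
Qed.

Lemma alive_cvg (R : realType) (S A : finType) Sbot (P : S -> A -> S -> R) pi s0 :
  (forall s a s', 0 <= P s a s') -> (forall s a, 0 <= pi s a) ->
  (expected_T Sbot P pi s0 < +oo)%E ->
  cvgn (series (fun t => \sum_s alive Sbot P pi s0 t s)).
Proof.
move=> P0 pi0 hT.
have w0 : forall t, 0 <= \sum_s alive Sbot P pi s0 t s.
  by move=> t; apply: sumr_ge0 => s _; exact: alive_ge0.
have ET0 : (0 <= expected_T Sbot P pi s0)%E.
  by apply: nneseries_ge0 => n _ _; rewrite lee_fin.
apply: nondecreasing_is_cvgn.
  by apply: nondecreasing_series => n _ _; exact: w0.
exists (fine (expected_T Sbot P pi s0)) => _ [n _ <-].
rewrite -lee_fin fineK; last by rewrite ge0_fin_numE.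
rewrite /series /= -sumEFin.
have := @nneseries_lim_ge R (fun t => (\sum_s alive Sbot P pi s0 t s)%:E) xpredT 0 n.
by apply => // k _ _; rewrite lee_fin.
Qed.

Lemma maxQ_arg (R : realType) (S A : finType) (a0 : A) (Q : S -> A -> R) s :
  maxQ Q s = Q s ([arg max_(a > a0) Q s a])%O.
Proof.
rewrite /maxQ; case: arg_maxP => //= b _ hb.
suff -> : (\big[Order.max/-oo%E]_(a : A) (Q s a)%:E = (Q s b)%:E)%E by [].
apply/eqP; rewrite eq_le; apply/andP; split.
  by apply: bigmax_le => [|a _]; [exact: leNye | rewrite lee_fin hb].
exact: le_bigmax.
Qed.

Lemma maxQ_ge (R : realType) (S A : finType) (a0 : A) (Q : S -> A -> R) s a :
  (Q s a <= maxQ Q s)%R.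
Proof.
rewrite (@maxQ_arg _ _ _ a0); case: arg_maxP => //= b _; exact. Qed.

Lemma sum_bound (R : realType) (S : finType) (p : pred S) (a f : S -> R) (K : R) :
  (forall s, 0 <= a s) -> (forall s, `|f s| <= K) ->
  `|\sum_(s | p s) a s * f s| <= K * \sum_s a s.
Proof.
move=> a0 fK; apply: le_trans (ler_norm_sum _ _ _) _.
apply: le_trans (_ : _ <= \sum_(s | p s) a s * K) _.
  apply: ler_sum => s _; rewrite normrM ger0_norm //; exact: ler_wpM2l.
rewrite mulr_sumr big_mkcond /=; apply: ler_sum => s _.
have K0 : 0 <= K by apply: le_trans (fK s); exact: normr_ge0.
by case: ifP => _; rewrite mulrC // mulr_ge0.
Qed.

Lemma cvgQT (R : realType) (S A : finType) Sbot (P : S -> A -> S -> R) (pi : S -> A -> R) s0 (g : S -> R) :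
  (forall s a s', 0 <= P s a s') -> (forall s a, 0 <= pi s a) ->
  (expected_T Sbot P pi s0 < +oo)%E ->
  cvgn (series (fun t => \sum_(s | s \in Sbot) alive Sbot P pi s0 t s * g s)).
Proof.
move=> P0 pi0 hT; have [K [K0 hK]] := @bound_fin _ _ g.
apply: (@dom_cvg _ _ (fun t => \sum_s alive Sbot P pi s0 t s) K) => //.
- by move=> t; apply: sumr_ge0 => s _; exact: alive_ge0.
- exact: alive_cvg.
- move=> n; apply: sum_bound => // s; exact: alive_ge0.
Qed.

Lemma part2 (R : realType) (S A : finType)
  (P : S -> A -> S -> R) (Rw : S -> R) (rho : S -> R) (Sbot : {set S}) (s0 : S)
  (Qstar : S -> A -> R) (pi : S -> A -> R) (Q : S -> A -> R) :
  is_ELP Sbot P rho s0 ->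
  (forall s a, bellman Sbot P Rw Qstar s a = Qstar s a) ->
  is_policy pi ->
  (forall s a, Q s a <= bellman Sbot P Rw Q s a) ->
  expected_QT Sbot P pi s0 Q <= expected_QT Sbot P pi s0 Qstar.
Proof.
move=> [hK [hrho [_ [s0bot [hT [hterm _]]]]]] hstar hpi hQ.
have P0 : forall s a s', 0 <= P s a s' by move=> s a s'; exact: (hK s a).1.
have pi0 : forall s a, 0 <= pi s a by move=> s a; exact: (hpi s).1.
have [a0 _] : exists a : A, True.
  case: (pickP (fun _ : A => true)) => [a _|h]; first by exists a.
  have := (hpi s0).2; rewrite big1 => [/eqP|a _]; last by have := h a.
  by rewrite eq_sym oner_eq0.
pose aq s := ([arg max_(a > a0) Q s a])%O.
pose m s := Q s (aq s) - Qstar s (aq s).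
have hD : forall s a, Q s a - Qstar s a <=
    \sum_s' P s a s' * (if s' \notin Sbot then m s' else 0).
  move=> s a; rewrite -(hstar s a).
  apply: le_trans (lerB (hQ s a) (lexx _)) _.
  rewrite /bellman -sumrB; apply: ler_sum => s' _; rewrite -mulrBr.
  apply: ler_wpM2l => //; case: ifP => _; last by rewrite subrr.
  rewrite opprD addrACA subrr add0r (@maxQ_arg _ _ _ a0 Q s').
  by apply: lerB => //; exact: (@maxQ_ge _ _ _ a0).
pose mu s a : R := if a == aq s then 1 else 0.
have mu0 : forall s a, 0 <= mu s a by move=> s a; rewrite /mu; case: ifP.
have hstep : forall s s', stepK P mu s s' = P s (aq s) s'.
  move=> s s'; rewrite /stepK (bigD1 (aq s)) //= /mu eqxx mul1r big1 ?addr0 //.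
  by move=> a /negbTE ->; rewrite mul0r.
have hmuT : (expected_T Sbot P mu s0 < +oo)%E.
  apply: hT => s; split => //.
  rewrite /mu (bigD1 (aq s)) //= eqxx big1 ?addr0 //.
  by move=> a /negbTE ->.
pose c := \sum_(s | s \notin Sbot) rho s * m s.
pose v n := \sum_(s | s \notin Sbot) alive Sbot P mu s0 n s * m s.
have hv0 : v 0%N = c.
  by apply: eq_bigr => s _; rewrite /= hstep hterm.
have hvS : forall n, v n <= v n.+1.
  move=> n; rewrite /v /=.
  rewrite [X in _ <= X](_ : _ = \sum_(s | s \notin Sbot) alive Sbot P mu s0 n s *
      \sum_(s' | s' \notin Sbot) P s (aq s) s' * m s'); last first.
    under eq_bigr do rewrite mulr_suml.
    rewrite exchange_big /=; apply: eq_bigr => s _; rewrite mulr_sumr.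
    by apply: eq_bigr => s' _; rewrite hstep mulrA.
  apply: ler_sum => s _; apply: ler_wpM2l; first exact: alive_ge0.
  apply: le_trans (hD s (aq s)) _; rewrite [X in _ <= X]big_mkcond.
  by apply: ler_sum => s' _; case: ifP => _; rewrite ?mulr0.
have hvc : forall n, c <= v n.
  elim => [|n IH]; first by rewrite hv0.
  exact: le_trans IH (hvS n).
have [K [K0 hKm]] := @bound_fin _ _ m.
pose w n := \sum_s alive Sbot P mu s0 n s.
have hvw : forall n, v n <= K * w n.
  move=> n; apply: le_trans (ler_norm _) _.
  apply: sum_bound => // s; exact: alive_ge0.
have hc : c <= 0.
  have cw := cvg_series_cvg_0 (@alive_cvg _ _ _ _ _ _ _ P0 mu0 hmuT).
  have h : ((fun n => K * w n) @ \oo --> 0)%classic.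
    by rewrite -(mulr0 K); exact: (@cvgMl_tmp _ _ _ _ w K 0 cw).
  have hn : (\forall n \near \oo, c <= K * w n)%classic.
    by apply: nearW => n; exact: le_trans (hvc n) (hvw n).
  have := limr_ge (cvgP _ h) hn.
  by move=> /(_ eventually_filter); rewrite (cvg_lim (@Rhausdorff _) h).
have hTD : forall s a, s \in Sbot -> Q s a - Qstar s a <= c.
  move=> s a hs; apply: le_trans (hD s a) _; rewrite /c [X in _ <= X]big_mkcond.
  apply: ler_sum => s' _; rewrite hterm //.
  by case: ifP => _; rewrite ?mulr0.
rewrite /expected_QT; apply: lim_series_le.
- exact: (@cvgQT _ _ _ Sbot P pi s0 (fun s => \sum_a pi s a * Q s a) P0 pi0 (hT pi hpi)).
- exact: (@cvgQT _ _ _ Sbot P pi s0 (fun s => \sum_a pi s a * Qstar s a) P0 pi0 (hT pi hpi)).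
move=> n; apply: ler_sum => s hs; apply: ler_wpM2l; first exact: alive_ge0.
rewrite -subr_le0 -sumrB.
apply: le_trans (_ : _ <= \sum_a pi s a * c) _.
  by apply: ler_sum => a _; rewrite -mulrBr; apply: ler_wpM2l => //; exact: hTD.
by rewrite -mulr_suml (hpi s).2 mul1r.
Qed.

Theorem mainTheorem9 (R : realType) (S A : finType)
  (P : S -> A -> S -> R) (Rw : S -> R) (rho : S -> R) (Sbot : {set S}) (s0 : S)
  (Qstar : S -> A -> R) (pi : S -> A -> R) :
  is_ELP Sbot P rho s0 ->
  (forall s a, bellman Sbot P Rw Qstar s a = Qstar s a) ->
  is_policy pi ->
  [/\ (forall s a, Qstar s a <= bellman Sbot P Rw Qstar s a),
      (forall Q : S -> A -> R, (forall s a, Q s a <= bellman Sbot P Rw Q s a) ->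
         expected_QT Sbot P pi s0 Q <= expected_QT Sbot P pi s0 Qstar) &
      (forall Q : S -> A -> R,
         (dual_fun Sbot P Rw pi s0 Q <= dual_fun Sbot P Rw pi s0 Qstar)%E)].
Proof.
move=> hE hstar hpi; split.
- by move=> s a; rewrite hstar.
- by move=> Q hQ; apply: (@part2 _ _ _ P Rw rho Sbot s0 Qstar pi Q).
move=> Q.
set EQs := expected_QT Sbot P pi s0 Qstar.
have lbs : (EQs%:E <= dual_fun Sbot P Rw pi s0 Qstar)%E.
  apply: le_ereal_inf_tmp => _ [lam hlam <-].
  rewrite lee_fin /lagrangian big1 ?addr0 // => s _.
  by rewrite big1 // => a _; rewrite hstar subrr mulr0.
apply: le_trans lbs; apply: ge_ereal_inf.
suff [lam hlam hL] : exists2 lam : S -> A -> R, (forall s a, 0 <= lam s a) &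
    lagrangian Sbot P Rw pi s0 Q lam <= EQs.
  by exists (lagrangian Sbot P Rw pi s0 Q lam)%:E; [exists lam | rewrite lee_fin].
case: (boolP [forall s, forall a, Q s a <= bellman Sbot P Rw Q s a]).
  move=> /forallP hall; exists (fun _ _ => 0) => // .
  rewrite /lagrangian big1 ?addr0; last first.
    by move=> s _; rewrite big1 // => a _; rewrite mul0r.
  apply: (@part2 _ _ _ P Rw rho Sbot s0 Qstar pi Q) => // s a.
  exact: (forallP (hall s)).
move=> /forallPn [s1 /forallPn [a1]]; rewrite -ltNge => hlt.
set d := bellman Sbot P Rw Q s1 a1 - Q s1 a1.
have d0 : d < 0 by rewrite /d subr_lt0.
set EQ := expected_QT Sbot P pi s0 Q.
set x := `|EQ - EQs|.
set cc := x / (- d).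
have cc0 : 0 <= cc by apply: divr_ge0; [exact: normr_ge0 | rewrite oppr_ge0 ltW].
exists (fun s a => if (s == s1) && (a == a1) then cc else 0).
  by move=> s a; case: ifP.
rewrite /lagrangian (bigD1 s1) //= (bigD1 a1) //= !eqxx /=.
rewrite big1 ?addr0; last first.
  by move=> a /negbTE ->; rewrite mul0r.
rewrite big1 ?addr0; last first.
  by move=> s /negbTE hs; rewrite big1 // => a _; rewrite hs mul0r.
have -> : cc * (bellman Sbot P Rw Q s1 a1 - Q s1 a1) = - x.
  by rewrite -/d /cc mulrAC invrN mulrN mulfK // (lt_eqF d0).
rewrite -/EQ; have : EQ - EQs <= x by exact: ler_norm.
move=> h; lra.
Qed.
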